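(* Let $\mathcal{X}$ be a countable set and $\pi$ a probability distribution on $\mathcal{X}$. Let $\mathcal{X}_1,\dots,\mathcal{X}_n\subset\mathcal{X}$ with $\bigcup_{i=1}^n\mathcal{X}_i=\mathcal{X}$, and for each $i$ let $Q_i$ be a Markov kernel defined on $\mathcal{X}_i$. Let $S_1,\dots,S_n:\mathcal{X}\to\mathcal{X}$ be $\pi$-invariant involutions, and let $\omega=(\omega_1,\dots,\omega_n):\mathcal{X}\to\Delta^{n-1}$ (the standard simplex $\{y\in\mathbb{R}^n:y_i\ge0,\sum_i y_i=1\}$) satisfy: (C1) $\omega_i(x)>0$ if and only if $x\in\mathcal{X}_i$, for $i=1,\dots,n$; (C2) $\omega_i(x)>0$ and $Q_i(x,x')>0$ if and only if $\omega_i(x')>0$ and $Q_i(S_i(x'),S_i(x))>0$; (C3) $\omega_i(S_i(x))=\omega_i(x)$ for all $x$ and all $i$. Then the Mixed Skew Metropolis–Hastings Markov chain (defined in the context) has $\pi$ as an invariant measure.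
   Context: The Mixed Skew Metropolis–Hastings (MSMH) chain is defined by the following transition from a current state $x$: sample an index $i$ with probability $\omega_i(x)$; sample a proposal $x'\sim Q_i(x,\cdot)$; compute $$r_i(x,x')=\frac{\pi(x')\,\omega_i(S_i(x'))\,Q_i(S_i(x'),S_i(x))}{\pi(x)\,\omega_i(x)\,Q_i(x,x')};$$ sample $u$ uniformly on $[0,1]$; if $u<r_i(x,x')$ the next state is $x'$, otherwise the next state is $S_i(x)$. A $\pi$-invariant involution is a map $S$ with $S\circ S=\mathrm{id}$ and $\pi(S(A))=\pi(A)$ for all $A\subset\mathcal{X}$. *)

(* Defs.v *)
From HB Require Import structures.
From mathcomp Require Import all_boot all_order all_algebra.
From mathcomp Require Import all_classical all_reals.
From mathcomp Require Import ereal esum.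
Set Implicit Arguments. Unset Strict Implicit. Unset Printing Implicit Defensive.
Import Order.TTheory GRing.Theory Num.Theory.
Local Open Scope classical_set_scope.
Local Open Scope ring_scope.

(* Acceptance ratio r_i(x,x') of the MSMH chain (MathComp convention a/0 = 0). *)
Definition msmh_ratio (R : realType) (T : countType) (n : nat)
  (pi : T -> R) (omega : 'I_n -> T -> R) (Q : 'I_n -> T -> T -> R)
  (S : 'I_n -> T -> T) (i : 'I_n) (x x' : T) : R :=
  (pi x' * omega i (S i x') * Q i (S i x') (S i x)) /
  (pi x * omega i x * Q i x x').

(* Probability of accepting: P(u < r) for u ~ Unif[0,1], i.e. min(1, r). *)
Definition msmh_accept (R : realType) (T : countType) (n : nat)
  (pi : T -> R) (omega : 'I_n -> T -> R) (Q : 'I_n -> T -> T -> R)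
  (S : 'I_n -> T -> T) (i : 'I_n) (x x' : T) : R :=
  Num.min 1 (msmh_ratio pi omega Q S i x x').

Definition msmh_kernel (R : realType) (T : countType) (n : nat)
  (pi : T -> R) (omega : 'I_n -> T -> R) (Q : 'I_n -> T -> T -> R)
  (S : 'I_n -> T -> T) (x y : T) : \bar R :=
  (\sum_(i < n) (omega i x)%:E *
     \esum_(x' in [set: T])
       (Q i x x' * (msmh_accept pi omega Q S i x x' * (x' == y)%:R
          + (1 - msmh_accept pi omega Q S i x x') * (S i x == y)%:R))%:E)%E.

Definition pi_invariant_involution (R : realType) (T : countType)
  (pi : T -> R) (S : T -> T) : Prop :=
  (forall x, S (S x) = x) /\
  (forall A : set T, \esum_(x in S @` A) (pi x)%:E = \esum_(x in A) (pi x)%:E).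

(* Main.v *)
Require Import Defs.
From HB Require Import structures.
From mathcomp Require Import all_boot all_order all_algebra.
From mathcomp Require Import all_classical all_reals.
From mathcomp Require Import ereal esum ring.
Set Implicit Arguments. Unset Strict Implicit. Unset Printing Implicit Defensive.
Import Order.TTheory GRing.Theory Num.Theory.
Local Open Scope classical_set_scope.
Local Open Scope ring_scope.
Lemma esumZl_ge0 (R : realType) (T : choiceType) (D : set T) (c : R) (a : T -> \bar R) :
  0 <= c -> (forall x, (0 <= a x)%E) ->
  (\esum_(x in D) (c%:E * a x) = c%:E * \esum_(x in D) a x)%E.
Proof.
move=> c0 a0; rewrite /esum -ereal_supZl//; last first.
  apply/set0P; exists (\sum_(x \in set0) a x)%E; exists set0 => //; exact: fsets_set0.
congr ereal_sup; apply/seteqP; split => z /=.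
- move=> [X [fX XD] <-]; exists (\sum_(x \in X) a x)%E; first by exists X.
  by rewrite !fsbig_finite// ge0_sume_distrr.
- move=> [_ [X [fX XD] <-] <-]; exists X => //.
  by rewrite !fsbig_finite// ge0_sume_distrr.
Qed.

Lemma esum_pt (R : realType) (T : choiceType) (t : T) (a : T -> \bar R) :
  (forall x, x != t -> a x = 0%E) -> (0 <= a t)%E ->
  (\esum_(x in [set: T]) a x = a t)%E.
Proof.
move=> az at0; rewrite -(esum_set1 at0) [RHS]esum_mkcond; apply: eq_esum => x _.
case: (eqVneq x t) => [->|xt]; first by rewrite mem_set.
rewrite az // memNset //= ; exact/eqP.
Qed.

Lemma mul_min1 (R : realType) (F H : R) : 0 <= F -> 0 <= H ->
  F * Num.min 1 (H / F) = Num.min F H.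
Proof.
move=> F0 H0; have [->|Fn0] := eqVneq F 0.
  by rewrite mul0r min_l.
by rewrite minr_pMr // mulr1 mulrCA mulfV // mulr1.
Qed.

Lemma acc_ge0 (R : realType) (a b : R) : 0 <= a -> 0 <= b -> 0 <= Num.min 1 (a / b).
Proof. by move=> a0 b0; rewrite le_min ler01 divr_ge0. Qed.

Lemma acc_le1 (R : realType) (r : R) : Num.min 1 r <= 1.
Proof. by rewrite ge_min lexx. Qed.

Theorem theorem4p2 (R : realType) (T : countType) (n : nat)
  (pi : T -> R) (X : 'I_n -> set T) (Q : 'I_n -> T -> T -> R)
  (S : 'I_n -> T -> T) (omega : 'I_n -> T -> R)
  (pi_ge0 : forall x, 0 <= pi x)
  (pi_sum1 : (\esum_(x in [set: T]) (pi x)%:E = 1)%E)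
  (X_cover : \bigcup_(i in [set: 'I_n]) X i = [set: T])
  (Q_ge0 : forall i x x', 0 <= Q i x x')
  (Q_sum1 : forall i x, X i x -> (\esum_(x' in [set: T]) (Q i x x')%:E = 1)%E)
  (S_inv : forall i, pi_invariant_involution pi (S i))
  (omega_ge0 : forall i x, 0 <= omega i x)
  (omega_sum1 : forall x, \sum_(i < n) omega i x = 1)
  (C1 : forall i x, 0 < omega i x <-> X i x)
  (C2 : forall i x x', (0 < omega i x /\ 0 < Q i x x') <->
                       (0 < omega i x' /\ 0 < Q i (S i x') (S i x)))
  (C3 : forall i x, omega i (S i x) = omega i x) :
  forall y : T,
    (\esum_(x in [set: T]) (pi x)%:E * msmh_kernel pi omega Q S x y)%E = (pi y)%:E.
Proof.
move=> y.
have SS i x : S i (S i x) = x by case: (S_inv i).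
have piS i x : pi (S i x) = pi x.
  have [_ HS] := S_inv i; have := HS [set x]; rewrite image_set1 !esum_set1 ?lee_fin //.
  by case.
pose f i x x' := pi x * omega i x * Q i x x'.
pose h i x x' := pi x' * omega i (S i x') * Q i (S i x') (S i x).
pose g i x x' := Num.min (f i x x') (h i x x').
have f0 i x x' : 0 <= f i x x' by rewrite /f !mulr_ge0.
have h0 i x x' : 0 <= h i x x' by rewrite /h !mulr_ge0.
have g0 i x x' : 0 <= g i x x' by rewrite /g le_min f0 h0.
have gf i x x' : g i x x' <= f i x x' by rewrite /g ge_min lexx.
have fg0 i x x' : 0 <= f i x x' - g i x x' by rewrite subr_ge0.
have gsym i x x' : g i (S i x') (S i x) = g i x x'.
  rewrite /g /f /h !SS piS minC; congr Num.min.
  by rewrite piS.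
have facc i x x' : f i x x' * msmh_accept pi omega Q S i x x' = g i x x'.
  by rewrite /msmh_accept /msmh_ratio /g /f /h mul_min1 // !mulr_ge0.
have acc0 i x x' : 0 <= msmh_accept pi omega Q S i x x'.
  by rewrite /msmh_accept /msmh_ratio acc_ge0 // !mulr_ge0.
have acc1 i x x' : msmh_accept pi omega Q S i x x' <= 1 by apply: acc_le1.
pose K i x x' := g i x x' * (x' == y)%:R + (f i x x' - g i x x') * (S i x == y)%:R.
have k0 i x x' : 0 <= Q i x x' * (msmh_accept pi omega Q S i x x' * (x' == y)%:R
          + (1 - msmh_accept pi omega Q S i x x') * (S i x == y)%:R).
  by rewrite mulr_ge0 // addr_ge0 // mulr_ge0 // ?subr_ge0.
have pw i x x' : pi x * omega i x * (Q i x x' * (msmh_accept pi omega Q S i x x' * (x' == y)%:R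
          + (1 - msmh_accept pi omega Q S i x x') * (S i x == y)%:R)) = K i x x'.
  rewrite /K -(facc i x x').
  set a := msmh_accept _ _ _ _ _ _ _; set b1 := (_ == _)%:R; set b2 := (_ == _)%:R.
  rewrite /f; ring.
have E1 x : ((pi x)%:E * msmh_kernel pi omega Q S x y)%E =
    (\sum_(i < n) \esum_(x' in [set: T]) (K i x x')%:E)%E.
  rewrite /msmh_kernel ge0_sume_distrr; last first.
    by move=> i _; rewrite mule_ge0 ?lee_fin // esum_ge0 // => x' _; rewrite lee_fin.
  apply: eq_bigr => i _.
  rewrite muleA -EFinM -esumZl_ge0 ?mulr_ge0 //; last by move=> x'; rewrite lee_fin.
  by apply: eq_esum => x' _; rewrite -EFinM pw.
rewrite (eq_esum (fun x _ => E1 x)) esum_sum; last first.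
  by move=> x i _ _; rewrite esum_ge0 // => x' _; rewrite lee_fin /K addr_ge0 // mulr_ge0.
have -> : (pi y)%:E = (\sum_(i < n) (pi y * omega i y)%:E)%E.
  by rewrite sumEFin -mulr_sumr omega_sum1 mulr1.
apply: eq_bigr => i _.
have Kx x : (\esum_(x' in [set: T]) (K i x x')%:E =
    (g i x y)%:E + (if S i x == y then \esum_(x' in [set: T]) (f i x x' - g i x x')%:E else 0))%E.
  rewrite /K (eq_esum (fun x' _ => EFinD _ _)) esumD; last 2 first.
  - by move=> x' _; rewrite lee_fin mulr_ge0.
  - by move=> x' _; rewrite lee_fin mulr_ge0.
  congr (_ + _)%E.
    rewrite (esum_pt (t := y)); first by rewrite eqxx mulr1.
      by move=> x' /negbTE ->; rewrite mulr0.
    by rewrite lee_fin mulr_ge0.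
  case: (eqVneq (S i x) y) => _.
    by apply: eq_esum => x' _; rewrite mulr1.
  by rewrite esum1 // => x' _; rewrite mulr0.
rewrite (eq_esum (fun x _ => Kx x)) esumD; last 2 first.
- by move=> x _; rewrite lee_fin.
- by move=> x _; case: ifP => _ //; rewrite esum_ge0 // => x' _; rewrite lee_fin.
rewrite [X in (_ + X)%E](esum_pt (t := S i y)); last 2 first.
- move=> x xS; case: ifP => // /eqP Sxy; case/eqP: xS; by rewrite -Sxy SS.
- by rewrite SS eqxx esum_ge0 // => x' _; rewrite lee_fin.
rewrite SS eqxx.
have Hf : (\esum_(x' in [set: T]) (f i (S i y) x')%:E = (pi y * omega i y)%:E)%E.
  under eq_esum do rewrite /f EFinM.
  rewrite esumZl_ge0 ?mulr_ge0 //; last by move=> x'; rewrite lee_fin.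
  rewrite piS C3.
  have [w0|wn0] := eqVneq (omega i y) 0; first by rewrite w0 mulr0 mul0e.
  rewrite Q_sum1 ?mule1 //; apply/C1; rewrite C3 lt_neqAle eq_sym wn0 omega_ge0 //.
have Hg : (\esum_(x' in [set: T]) (g i (S i y) x')%:E = \esum_(x in [set: T]) (g i x y)%:E)%E.
  rewrite (reindex_esum [set: T] [set: T] (S i)); last first.
    split => //=.
    - by move=> a b _ _ /(congr1 (S i)); rewrite !SS.
    - by move=> b _; exists (S i b) => //; exact: SS.
  apply: eq_esum => x' _; by rewrite gsym.
rewrite -Hf -Hg -esumD; last 2 first.
- by move=> x' _; rewrite lee_fin.
- by move=> x' _; rewrite lee_fin.
by apply: eq_esum => x' _; rewrite -EFinD addrC subrK.
Qed.
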